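(* Assume $-\infty<l<r<\infty$, $\inf\operatorname{supp}\mu>-\infty$ and $\sup\operatorname{supp}\mu<\infty$. If $\limsup_{x\searrow l}\frac{|\eta(x)|}{x-l}<\infty$, then: $q(l+)=\infty$ implies $\liminf_{y\searrow l}G_y(\bar a(y))>0$. If $\limsup_{x\nearrow r}\frac{|\eta(x)|}{r-x}<\infty$, then: $q(r-)=\infty$ implies $\liminf_{y\nearrow r}G_y(\bar a(y))>0$.
   Context: Let $I=(l,r)$, $\eta\colon\mathbb R\to\mathbb R$ Borel with $\eta\ne0$ on $I$, $1/\eta^2\in L^1_{\mathrm{loc}}(I)$, $\eta=0$ off $I$, $m\in I$. $q(y,x)=\int_y^x\int_y^u\frac{2}{\eta^2(z)}dz\,du\in[0,\infty]$; $q(l+)=\lim_{x\searrow l}q(m,x)$, $q(r-)=\lim_{x\nearrow r}q(m,x)$. $\mu\ne\delta_0$ is a centered probability measure, $G_y(a)=\int q(y,y+ax)\mu(dx)$, and $\bar a(y)=\frac{l-y}{\inf\operatorname{supp}\mu}\wedge\frac{r-y}{\sup\operatorname{supp}\mu}$ for $y\in I$. *)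

(* Defs.v *)
From HB Require Import structures.
From mathcomp Require Import all_boot all_order all_algebra.
From mathcomp Require Import all_classical all_reals all_analysis.
Set Implicit Arguments. Unset Strict Implicit. Unset Printing Implicit Defensive.
Import Order.TTheory GRing.Theory Num.Theory.
Import numFieldNormedType.Exports.
Local Open Scope classical_set_scope.
Local Open Scope ring_scope.

Section Defs.
Variable R : realType.

Definition twoinvsq (eta : R -> R) (z : R) : \bar R :=
  if eta z == 0 then +oo%E else (2 / eta z ^+ 2)%:E.

(* q(y,x) = int_y^x int_y^u 2/eta^2(z) dz du, with oriented integrals;
   for x < y both orientations flip, giving the nonnegative value below. *)
Definition qfun (eta : R -> R) (y x : R) : \bar R :=
  if y <= x then
    (\int[lebesgue_measure]_(u in `[y, x])
       \int[lebesgue_measure]_(z in `[y, u]) twoinvsq eta z)%E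
  else
    (\int[lebesgue_measure]_(u in `[x, y])
       \int[lebesgue_measure]_(z in `[u, y]) twoinvsq eta z)%E.

Definition supp (mu : set R -> \bar R) : set R :=
  [set x | forall e : R, 0 < e -> (0 < mu (ball x e))%E].

Definition Gfun (eta : R -> R) (mu : probability R R) (y a : R) : \bar R :=
  (\int[mu]_x qfun eta y (y + a * x))%E.

Definition abar (mu : probability R R) (l r y : R) : R :=
  Order.min ((l - y) / inf (supp mu)) ((r - y) / sup (supp mu)).

End Defs.

(* Main.v *)
Require Import Defs.
From HB Require Import structures.
From mathcomp Require Import all_boot all_order all_algebra.
From mathcomp Require Import all_classical all_reals all_analysis.
Set Implicit Arguments. Unset Strict Implicit. Unset Printing Implicit Defensive.
Import Order.TTheory GRing.Theory Num.Theory.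
Import numFieldNormedType.Exports.
Local Open Scope classical_set_scope.
Local Open Scope ring_scope.
Import HBNNSimple.
From mathcomp Require Import ring lra.
Lemma lb_integral d (T : measurableType d) (R : realType)
  (mu : {measure set T -> \bar R}) (D A : set T) (f : T -> \bar R) (c : R) :
  measurable D -> measurable A -> 0 <= c ->
  (forall x, D x -> (0 <= f x)%E) -> (forall x, D x -> A x -> (c%:E <= f x)%E) ->
  (c%:E * mu (A `&` D) <= \int[mu]_(x in D) f x)%E.
Proof.
move=> mD mA c0 f0 fc.
pose h := scale_nnsfun (indic_nnsfun R mA) c0.
have -> : (c%:E * mu (A `&` D) = \int[mu]_(x in D) (h x)%:E)%E.
  rewrite /h /=.
  under eq_integral do rewrite measurable_realfun.mindicE.
  rewrite (@integralZl_indic _ _ _ _ _ _ (fun _ => A))//; last first.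
    by move=> c0'; move: (lt_le_trans c0' c0); rewrite ltxx.
  by rewrite integral_indic.
rewrite integral_nnsfun// ge0_integralE//.
apply: ereal_sup_ubound; exists (proj_nnsfun h mD); last by rewrite mrestrict.
move=> x /=; rewrite /patch !measurable_realfun.mindicE; have [Dx|Dx] := pselect (D x).
  rewrite (mem_set Dx) mulr1; have [Ax|Ax] := pselect (A x).
    by rewrite (mem_set Ax) mulr1 fc.
  by rewrite (memNset Ax) mulr0 f0.
by rewrite (memNset Dx) !mulr0.
Qed.
Section S.
Variable R : realType.
Variable mu : probability R R.


Lemma supp_in (a b : R) : (0 < mu `[a, b]%classic)%E ->
  exists p, supp mu p /\ a <= p <= b.
Proof.
move=> hb.
pose T := [set t : R | (0 < mu `[a, t]%classic)%E].
have Tb : T b by [].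
have Ta : lbound T a.
  move=> t; rewrite /T /=; apply: contraPP; move/negP; rewrite -ltNge => ta.
  rewrite set_itv_ge ?measure0 ?ltxx//; by rewrite bnd_simp -ltNge.
have hinf : has_inf T by split; [exists b | exists a].
exists (inf T); split; last first.
  apply/andP; split; [apply: lb_le_inf => //; by exists b | exact: ge_inf (proj2 hinf) _ Tb].
move=> e e0.
have [t Tt tlt] := inf_adherent e0 hinf.
have mse : mu `[a, inf T - e]%classic = 0%E.
  apply/eqP; rewrite eq_le measure_ge0 andbT leNgt; apply/negP => pos.
  have := ge_inf (proj2 hinf) pos; apply/negP; rewrite -ltNge ltrBlDr ltrDl; exact: e0.
have sub : `[a, t]%classic `<=` `[a, inf T - e]%classic `|` ball (inf T) e.
  move=> z; rewrite /= !in_itv /= => /andP[az zt].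
  have [zl|zg] := leP z (inf T - e); [left | right].
    by rewrite az.
  rewrite ball_itv /= in_itv /= zg /=.
  by rewrite (le_lt_trans zt)// ltrBlDl addrC.
apply: (lt_le_trans Tt).
apply: (le_trans (le_measure _ _ _ sub)); rewrite ?inE.
- exact: measurable_itv.
- apply: measurableU; [exact: measurable_itv | exact: measurable_realfun.measurable_ball].
apply: (le_trans (measureU2 _ _ _)).
- exact: measurable_itv.
- exact: measurable_realfun.measurable_ball.
by rewrite [X in (X + _)%E](_ : _ = 0%E) ?add0e //; exact: mse.
Qed.

Lemma null_bigcup (F : nat -> set R) (X : set R) :
  (forall n, measurable (F n)) -> measurable X -> X `<=` \bigcup_n F n ->
  (forall n, mu (F n) = 0%E) -> mu X = 0%E.
Proof.
move=> mF mX XF F0; apply/eqP; rewrite eq_le measure_ge0 andbT.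
apply: le_trans (measure_sigma_subadditive _ mF mX XF) _.
by rewrite eseries0 // => i _ _; exact: F0.
Qed.

Lemma pos_cover : `]0%R, +oo[%classic `<=` \bigcup_n `[(n.+1%:R^-1 : R), n.+1%:R]%classic.
Proof.
move=> x; rewrite /= in_itv /= andbT => x0.
have h := truncnS_gt (x + x^-1).
have xi0 : 0 < x^-1 by rewrite invr_gt0.
exists (Num.truncn (x + x^-1)) => //=; rewrite in_itv /=; apply/andP; split.
  rewrite -[leRHS](invrK x) lef_pV2 ?posrE ?invr_gt0 //; apply/ltW/(le_lt_trans _ h).
  by rewrite lerDr ltW.
by apply/ltW/(le_lt_trans _ h); rewrite lerDl ltW.
Qed.

Lemma neg_cover : `]-oo, 0%R[%classic `<=` \bigcup_n `[- (n.+1%:R : R), - (n.+1%:R^-1 : R)]%classic.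
Proof.
move=> x; rewrite /= in_itv /= => x0.
have nx0 : 0 < - x by rewrite oppr_gt0.
have h := truncnS_gt ((-x) + (-x)^-1).
have xi0 : 0 < (- x)^-1 by rewrite invr_gt0.
exists (Num.truncn ((-x) + (-x)^-1)) => //=; rewrite in_itv /=; apply/andP; split.
  by rewrite lerNl; apply/ltW/(le_lt_trans _ h); rewrite lerDl ltW.
rewrite lerNr -[leRHS](invrK (-x)) lef_pV2 ?posrE ?invr_gt0 //; apply/ltW/(le_lt_trans _ h).
by rewrite lerDr ltW.
Qed.

Lemma mu_eq0_from (c : R) (A D : set R) (f : R -> \bar R) : (0 < c)%R ->
  measurable A -> measurable D -> A `<=` D ->
  (forall x, D x -> (0 <= f x)%E) -> (forall x, D x -> A x -> (c%:E <= f x)%E) ->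
  (\int[mu]_(x in D) f x = 0)%E -> mu A = 0%E.
Proof.
move=> c0 mA mD AD f0 fc i0.
have := lb_integral mu mD mA (ltW c0) f0 fc; rewrite i0 setIidl//.
move=> H; apply/eqP; rewrite eq_le measure_ge0 andbT.
by rewrite -(@lee_pmul2l _ c%:E) ?lte_fin// mule0.
Qed.

Hypothesis mean0 : (\int[mu]_x x%:E = 0)%E.
Hypothesis intx : mu.-integrable setT (fun x => x%:E).

Lemma negnull_posnull : mu `]-oo, 0%R[%classic = 0%E -> mu `]0%R, +oo[%classic = 0%E.
Proof.
move=> N0.
have mN : measurable (`]-oo, 0%R[%classic : set R) by exact: measurable_itv.
have mD : measurable (setT `\` `]-oo, 0%R[%classic : set R) by exact: measurableD.
have Dx (x : R) : (setT `\` `]-oo, 0%R[%classic) x -> (0 <= x)%R.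
  by move=> [_ /=]; rewrite in_itv /= leNgt => /negP.
have iD : (\int[mu]_(x in setT `\` `]-oo, 0%R[%classic) x%:E = 0)%E.
  by rewrite -(negligible_integral mN).
rewrite integralE in iD.
have ineg : (\int[mu]_(x in setT `\` `]-oo, 0%R[%classic) (fun x => x%:E)^\- x = 0)%E.
  apply: integral0_eq => x /Dx x0; rewrite funenegE; apply/max_idPr.
  by rewrite leeNl oppe0 lee_fin.
rewrite ineg sube0 in iD.
apply: (null_bigcup _ _ (@pos_cover)).
- by move=> n; exact: measurable_itv.
- exact: measurable_itv.
move=> n; apply: (@mu_eq0_from (n.+1%:R^-1) _ _ _ _ _ mD _ _ _ iD).
- by rewrite invr_gt0.
- exact: measurable_itv.
- move=> x; rewrite /= in_itv /= => /andP[xn _]; split => //.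
  by rewrite in_itv /= => /(le_lt_trans xn); rewrite ltNge invr_ge0 ler0n.
- by move=> x _; rewrite funeposE le_max lexx orbT.
- move=> x _; rewrite /= in_itv /= => /andP[xn _].
  by rewrite funeposE le_max lee_fin xn.
Qed.

Lemma posnull_negnull : mu `]0%R, +oo[%classic = 0%E -> mu `]-oo, 0%R[%classic = 0%E.
Proof.
move=> N0.
have mN : measurable (`]0%R, +oo[%classic : set R) by exact: measurable_itv.
have mD : measurable (setT `\` `]0%R, +oo[%classic : set R) by exact: measurableD.
have Dx (x : R) : (setT `\` `]0%R, +oo[%classic) x -> (x <= 0)%R.
  by move=> [_ /=]; rewrite in_itv /= andbT leNgt => /negP.
have iD : (\int[mu]_(x in setT `\` `]0%R, +oo[%classic) x%:E = 0)%E.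
  by rewrite -(negligible_integral mN).
rewrite integralE in iD.
have ipos : (\int[mu]_(x in setT `\` `]0%R, +oo[%classic) (fun x => x%:E)^\+ x = 0)%E.
  apply: integral0_eq => x /Dx x0; rewrite funeposE; apply/max_idPr.
  by rewrite lee_fin.
rewrite ipos sub0e in iD; move/eqP: iD; rewrite eqe_oppLR oppe0 => /eqP iD.
apply: (null_bigcup _ _ (@neg_cover)).
- by move=> n; exact: measurable_itv.
- exact: measurable_itv.
move=> n; apply: (@mu_eq0_from (n.+1%:R^-1) _ _ _ _ _ mD _ _ _ iD).
- by rewrite invr_gt0.
- exact: measurable_itv.
- move=> x; rewrite /= in_itv /= => /andP[_ xn]; split => //.
  by rewrite in_itv /= andbT => /lt_le_trans => /(_ _ xn); rewrite ltNge lerNl oppr0 invr_ge0 ler0n.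
- by move=> x _; rewrite funenegE le_max lexx orbT.
- move=> x _; rewrite /= in_itv /= => /andP[_ xn].
  by rewrite funenegE le_max lee_fin lerNr xn.
Qed.

Lemma both_null_dirac : mu `]-oo, 0%R[%classic = 0%E -> mu `]0%R, +oo[%classic = 0%E ->
  forall A, measurable A -> mu A = \d_(0%R : R) A.
Proof.
move=> N0 P0 A mA.
have mN : measurable (`]-oo, 0%R[%classic : set R) by exact: measurable_itv.
have mP : measurable (`]0%R, +oo[%classic : set R) by exact: measurable_itv.
have NP0 : mu (`]-oo, 0%R[%classic `|` `]0%R, +oo[%classic) = 0%E.
  apply/eqP; rewrite eq_le measure_ge0 andbT.
  apply: le_trans (measureU2 _ mN mP) _.
  rewrite [X in (X + _)%E](_ : _ = 0%E); last exact: N0.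
  by rewrite [X in (_ + X)%E](_ : _ = 0%E) ?adde0; last exact: P0.
rewrite diracE; have [A0|A0] := boolP (0%R \in A).
  apply/eqP; rewrite eq_le probability_le1//=.
  rewrite -(@probability_setT _ _ _ mu).
  have sub : [set: R] `<=` A `|` (`]-oo, 0%R[%classic `|` `]0%R, +oo[%classic).
    move=> x _; have [x0|x0|->] := ltgtP x 0%R; [right; left|right; right|left].
    - by rewrite /= in_itv.
    - by rewrite /= in_itv /= x0.
    - by rewrite inE in A0.
  apply: (le_trans (le_measure _ _ _ sub)); rewrite ?inE //.
  - apply: measurableU => //; exact: measurableU.
  apply: (le_trans (measureU2 _ _ _)) => //; first exact: measurableU.
  by rewrite [X in (_ + X)%E](_ : _ = 0%E) ?adde0; last exact: NP0.
apply/eqP; rewrite eq_le measure_ge0 andbT.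
have sub : A `<=` (`]-oo, 0%R[%classic `|` `]0%R, +oo[%classic).
  move=> x Ax; have [x0|x0|x0] := ltgtP x 0%R; [left|right|].
  - by rewrite /= in_itv.
  - by rewrite /= in_itv /= x0.
  - by move: A0; rewrite -x0 (mem_set Ax).
apply: (le_trans (le_measure _ _ _ sub)); rewrite ?inE //; first exact: measurableU.
by rewrite [X in (X <= _)%E](_ : _ = 0%E) //; exact: NP0.
Qed.

Hypothesis notdirac : exists A, measurable A /\ mu A <> \d_(0%R : R) A.

Lemma exists_neg_supp : exists p, supp mu p /\ (p < 0)%R.
Proof.
have N0 : mu `]-oo, 0%R[%classic != 0%E.
  apply/eqP => N0; have [A [mA]] := notdirac; apply.
  by apply: both_null_dirac => //; apply: negnull_posnull.
have [n nn] : exists n, (0 < mu `[(- (n.+1%:R : R))%R, (- (n.+1%:R^-1 : R))%R]%classic)%E.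
  apply/not_existsP => H; move/eqP: N0; apply.
  apply: (null_bigcup _ _ (@neg_cover)).
  - by move=> n; exact: measurable_itv.
  - exact: measurable_itv.
  move=> n; apply/eqP; rewrite eq_le measure_ge0 andbT leNgt; apply/negP => h.
  by apply: (H n).
have [p [sp /andP[_ pn]]] := supp_in nn.
exists p; split => //; apply: le_lt_trans pn _.
by rewrite oppr_lt0 invr_gt0.
Qed.

Lemma exists_pos_supp : exists p, supp mu p /\ (0 < p)%R.
Proof.
have P0 : mu `]0%R, +oo[%classic != 0%E.
  apply/eqP => P0; have [A [mA]] := notdirac; apply.
  by apply: both_null_dirac => //; apply: posnull_negnull.
have [n nn] : exists n, (0 < mu `[(n.+1%:R^-1 : R)%R, (n.+1%:R : R)%R]%classic)%E.
  apply/not_existsP => H; move/eqP: P0; apply.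
  apply: (null_bigcup _ _ (@pos_cover)).
  - by move=> n; exact: measurable_itv.
  - exact: measurable_itv.
  move=> n; apply/eqP; rewrite eq_le measure_ge0 andbT leNgt; apply/negP => h.
  by apply: (H n).
have [p [sp /andP[pn _]]] := supp_in nn.
exists p; split => //; apply: lt_le_trans pn.
by rewrite invr_gt0.
Qed.
End S.
Section Q.
Variable R : realType.
Local Notation lam := (@lebesgue_measure R).

Lemma twoinvsq_ge0 (eta : R -> R) z : (0 <= twoinvsq eta z)%E.
Proof.
rewrite /twoinvsq; case: ifPn => // _; rewrite lee_fin.
by apply: divr_ge0 => //; apply: sqr_ge0.
Qed.

Lemma qfun_ge0 (eta : R -> R) (y x : R) : (0 <= qfun eta y x)%E.
Proof.
rewrite /qfun; case: ifPn => _; apply: integral_ge0 => u _;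
  apply: integral_ge0 => z _; exact: twoinvsq_ge0.
Qed.

Lemma lam_itv (a b : R) : a <= b -> lam (`[a, b] : set (measurableTypeR R)) = (b - a)%:E.
Proof.
move=> ab; rewrite lebesgue_measure_itv /=.
case: ifPn; first by rewrite lte_fin => _; rewrite EFinB.
rewrite lte_fin -leNgt => ba; have -> : b = a by apply/eqP; rewrite eq_le ba ab.
by rewrite subrr.
Qed.

Lemma inner_lb (eta : R -> R) (u y K : R) : u <= y -> 0 <= K ->
  (forall z, u <= z <= y -> (K%:E <= twoinvsq eta z)%E) ->
  ((K * (y - u))%:E <= \int[lam]_(z in `[u, y]) twoinvsq eta z)%E.
Proof.
move=> uy K0 HK.
have := @lb_integral _ (measurableTypeR R) R lam `[u, y] setT (twoinvsq eta) K
  (measurable_itv _) measurableT K0 (fun z _ => twoinvsq_ge0 eta z).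
move=> H; rewrite [X in (_ * X <= _)%E](_ : _ = (y - u)%:E) in H; last by rewrite setTI; exact: lam_itv.
rewrite EFinM; apply: H => z + _.
by rewrite /= in_itv /=; apply: HK.
Qed.

Lemma q_lb_left (eta : R -> R) (y w K : R) : w <= y -> 0 <= K ->
  (forall z, w <= z <= y -> (K%:E <= twoinvsq eta z)%E) ->
  ((K * (y - w) ^+ 2 / 4)%:E <= qfun eta y w)%E.
Proof.
move=> wy K0 HK; rewrite le_eqVlt in wy; case/orP: wy => [/eqP ->|wy].
  by rewrite subrr expr0n /= mulr0 mul0r qfun_ge0.
have yw : (y <= w) = false by rewrite leNgt wy.
rewrite /qfun yw /=.
set mid := (w + y) / 2.
have wm : w <= mid by rewrite /mid ler_pdivlMr// mulr2n mulrDr mulr1 lerD2l ltW.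
have my : mid <= y by rewrite /mid ler_pdivrMr// mulrDr mulr1 lerD2r ltW.
have c0 : 0 <= K * (y - w) / 2 by rewrite divr_ge0// mulr_ge0// subr_ge0 ltW.
have := @lb_integral _ (measurableTypeR R) R lam `[w, y] `[w, mid] (fun u => (\int[lam]_(z in `[u, y]) twoinvsq eta z)%E) _
  (measurable_itv _) (measurable_itv _) c0.
have -> : `[w, mid] `&` `[w, y] = `[w, mid]%classic :> set R.
  apply/setIidl => z /=; rewrite !in_itv /= => /andP[-> /le_trans]; exact.
move=> H; rewrite [X in (_ * X <= _)%E](_ : _ = (mid - w)%:E) in H; last exact: lam_itv.
rewrite -EFinM in H; apply: le_trans (H _ _); cycle 1.
- by move=> u _; apply: integral_ge0 => z _; exact: twoinvsq_ge0.
- move=> u; rewrite /= !in_itv /= => /andP[wu uy] /andP[_ um].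
  apply: (le_trans _ (inner_lb uy K0 _)); last first.
    by move=> z /andP[uz zy]; apply: HK; rewrite zy (le_trans wu uz).
  rewrite lee_fin; rewrite -mulrA ler_wpM2l//.
  rewrite ler_pdivrMr//; move: um; rewrite /mid ler_pdivlMr//; lra.
- rewrite lee_fin /mid le_eqVlt; apply/orP; left; apply/eqP; by field.
Qed.

Lemma q_lb_right (eta : R -> R) (y w K : R) : y <= w -> 0 <= K ->
  (forall z, y <= z <= w -> (K%:E <= twoinvsq eta z)%E) ->
  ((K * (w - y) ^+ 2 / 4)%:E <= qfun eta y w)%E.
Proof.
move=> yw K0 HK; rewrite le_eqVlt in yw; case/orP: yw => [/eqP ->|yw].
  by rewrite subrr expr0n /= mulr0 mul0r qfun_ge0.
rewrite /qfun (ltW yw) /=.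
set mid := (y + w) / 2.
have ym : y <= mid by rewrite /mid ler_pdivlMr// mulr2n mulrDr mulr1 lerD2l ltW.
have mw : mid <= w by rewrite /mid ler_pdivrMr// mulrDr mulr1 lerD2r ltW.
have c0 : 0 <= K * (w - y) / 2 by rewrite divr_ge0// mulr_ge0// subr_ge0 ltW.
have := @lb_integral _ (measurableTypeR R) R lam `[y, w] `[mid, w] (fun u => (\int[lam]_(z in `[y, u]) twoinvsq eta z)%E) _
  (measurable_itv _) (measurable_itv _) c0.
have -> : `[mid, w] `&` `[y, w] = `[mid, w]%classic :> set R.
  apply/setIidl => z /=; rewrite !in_itv /= => /andP[mz ->]; rewrite andbT (le_trans ym mz)//.
move=> H; rewrite [X in (_ * X <= _)%E](_ : _ = (w - mid)%:E) in H; last exact: lam_itv.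
rewrite -EFinM in H; apply: le_trans (H _ _); cycle 1.
- by move=> u _; apply: integral_ge0 => z _; exact: twoinvsq_ge0.
- move=> u; rewrite /= !in_itv /= => /andP[yu uw] /andP[mu _].
  apply: (le_trans _ (inner_lb yu K0 _)); last first.
    by move=> z /andP[yz zu]; apply: HK; rewrite yz (le_trans zu uw).
  rewrite lee_fin; rewrite -mulrA ler_wpM2l//.
  rewrite ler_pdivrMr//; move: mu; rewrite /mid ler_pdivrMr//; lra.
- rewrite lee_fin /mid le_eqVlt; apply/orP; left; apply/eqP; by field.
Qed.
End Q.
Section N.
Variable R : realType.
Lemma near_right_ex (l : R) (P : R -> Prop) : (\forall x \near l^'+, P x) ->
  exists2 e : R, 0 < e & forall x, l < x < l + e -> P x.
Proof.
rewrite near_withinE => /nbhs_ballP[e e0 He]; exists e => // x /andP[lx xle].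
apply: He => //; rewrite /ball /= ltr_norml; apply/andP; split; lra.
Qed.
Lemma ex_near_right (l : R) (P : R -> Prop) :
  (exists2 e : R, 0 < e & forall x, l < x < l + e -> P x) -> \forall x \near l^'+, P x.
Proof.
move=> [e e0 He]; rewrite near_withinE; apply/nbhs_ballP; exists e => // x.
rewrite /ball /= ltr_norml => /andP[h1 h2] lx; apply: He; apply/andP; split; lra.
Qed.
Lemma near_left_ex (r : R) (P : R -> Prop) : (\forall x \near r^'-, P x) ->
  exists2 e : R, 0 < e & forall x, r - e < x < r -> P x.
Proof.
rewrite near_withinE => /nbhs_ballP[e e0 He]; exists e => // x /andP[lx xle].
apply: He => //; rewrite /ball /= ltr_norml; apply/andP; split; lra.
Qed.
Lemma ex_near_left (r : R) (P : R -> Prop) :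
  (exists2 e : R, 0 < e & forall x, r - e < x < r -> P x) -> \forall x \near r^'-, P x.
Proof.
move=> [e e0 He]; rewrite near_withinE; apply/nbhs_ballP; exists e => // x.
rewrite /ball /= ltr_norml => /andP[h1 h2] lx; apply: He; apply/andP; split; lra.
Qed.
End N.

Unset Implicit Arguments.

Theorem mainTheorem11 (R : realType) (l r m : R) (eta : R -> R)
  (mu : probability R R) :
  l < r ->
  measurable_fun setT eta ->
  (forall x, l < x < r -> eta x != 0) ->
  (forall a b, l < a -> b < r ->
     lebesgue_measure.-integrable `[a, b] (fun z => ((eta z ^+ 2)^-1)%:E)) ->
  (forall x, ~ (l < x < r) -> eta x = 0) ->
  l < m < r ->
  mu.-integrable setT (fun x => x%:E) ->
  (\int[mu]_x x%:E = 0)%E ->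
  (exists A, measurable A /\ mu A <> \d_(0 : R) A) ->
  has_lbound (supp mu) -> has_ubound (supp mu) ->
  ((exists C : R, \forall x \near l^'+, `|eta x| / (x - l) <= C) ->
     qfun eta m x @[x --> l^'+] --> +oo%E ->
     exists c : R, 0 < c /\
       \forall y \near l^'+, (c%:E <= Gfun eta mu y (abar mu l r y))%E) /\
  ((exists C : R, \forall x \near r^'-, `|eta x| / (r - x) <= C) ->
     qfun eta m x @[x --> r^'-] --> +oo%E ->
     exists c : R, 0 < c /\
       \forall y \near r^'-, (c%:E <= Gfun eta mu y (abar mu l r y))%E).

Proof.
move=> lr meta etaI _ etaO _ intx mean0 nd hlb hub.
have [pn [spn pn0]] := exists_neg_supp mean0 intx nd.
have [pp [spp pp0]] := exists_pos_supp mean0 intx nd.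
set al := inf (supp mu); set be := sup (supp mu).
have aln : al <= pn := ge_inf hlb spn.
have bgp : pp <= be.
  apply: sup_upper_bound => //; split => //; by exists pp.
have al0 : al < 0 by apply: le_lt_trans pn0.
have be0 : 0 < be by apply: lt_le_trans bgp.
pose ka := Order.min (- al)^-1 be^-1.
have ka0 : 0 < ka by rewrite lt_min !invr_gt0 oppr_gt0 al0 be0.
have kal : ka <= (- al)^-1 by rewrite ge_min lexx.
have kbe : ka <= be^-1 by rewrite ge_min lexx orbT.
have etaIff z : eta z != 0 -> l < z < r.
  by apply: contraNT => /negP h; apply/eqP; apply: etaO.
split.
- move=> [C HC] _.
  have [e e0 He] := near_right_ex HC.
  pose C' := Order.max C 1.
  have C'0 : 0 < C' by rewrite lt_max ltr01 orbT.
  have CC' : C <= C' by rewrite le_max lexx.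
  have pn2 : 0 < - pn / 2 by rewrite divr_gt0// oppr_gt0.
  pose S := ball pn (- pn / 2).
  have mS : measurable S by exact: measurable_realfun.measurable_ball.
  have muS : (0 < mu S)%E by exact: spn.
  have muSf : mu S \is a fin_num.
    by rewrite ge0_fin_numE ?measure_ge0// (le_lt_trans (probability_le1 _ mS)) ?ltey.
  pose c0 := ka ^+ 2 * pn ^+ 2 / (8 * C' ^+ 2).
  have c00 : 0 < c0.
    rewrite /c0 !expr2; apply: divr_gt0; first by apply: mulr_gt0; nra.
    by apply: mulr_gt0 => //; nra.
  exists (c0 * fine (mu S)); split.
    by rewrite mulr_gt0// fine_gt0// muS ltey_eq muSf.
  apply: ex_near_right; exists (Order.min e ((r - l) / 2)).
    by rewrite lt_min e0 divr_gt0// subr_gt0.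
  move=> y /andP[ly]; rewrite -ltrBlDl lt_min => /andP[ye yh].
  have yl0 : 0 < y - l by rewrite subr_gt0.
  have yr : y - l <= r - y by move: yh; rewrite ltr_pdivlMr //; lra.
  set a := abar mu l r y.
  have aka : ka * (y - l) <= a.
    rewrite /a /abar le_min; apply/andP; split.
      rewrite -/al; have -> : (l - y) / al = (y - l) * (- al)^-1 by field; rewrite lt_eqF.
      by rewrite mulrC ler_wpM2l // ltW.
    rewrite -/be mulrC; apply: (le_trans (ler_wpM2l (ltW yl0) kbe)).
    by rewrite ler_wpM2r // invr_ge0 ltW.
  rewrite /Gfun.
  apply: (le_trans _ (lb_integral mu measurableT mS (ltW c00) (fun x _ => qfun_ge0 _ _ _) _)).
    rewrite setIT EFinM fineK//.
  move=> x _ Sx.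
  have xn : x < pn / 2.
    move: Sx; rewrite /S ball_itv /= in_itv /= => /andP[_]; lra.
  have a0 : 0 < a by apply: lt_le_trans aka; rewrite mulr_gt0.
  have wy : y + a * x <= y by rewrite gerDl; apply: mulr_ge0_le0; [exact: ltW | lra].
  pose K := 2 / (C' ^+ 2 * (y - l) ^+ 2).
  have K0 : 0 <= K by rewrite /K divr_ge0// mulr_ge0// sqr_ge0.
  have HK : forall z, y + a * x <= z <= y -> (K%:E <= twoinvsq eta z)%E.
    move=> z /andP[wz zy]; rewrite /twoinvsq; case: ifPn => [_|ez]; first exact: leey.
    have /andP[lz zr] := etaIff z ez.
    have hz := He z.
    have /hz : l < z < l + e by rewrite lz /=; lra.
    have zl0 : 0 < z - l by rewrite subr_gt0.
    rewrite ler_pdivrMr // => hz'.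
    have : `|eta z| <= C' * (y - l).
      apply: (le_trans hz'); apply: (le_trans (ler_wpM2r (ltW zl0) CC')).
      by rewrite ler_wpM2l; [lra | exact: ltW | lra].
    move=> /ler_normlP[h1 h2].
    rewrite lee_fin /K ler_pM2l // lef_pV2 ?posrE.
    + rewrite !expr2; have hy : 0 <= C' * (y - l) by rewrite mulr_ge0// ltW.
      nra.
    + by rewrite mulr_gt0// exprn_gt0.
    + by rewrite lt0r sqr_ge0 andbT sqrf_eq0.
  apply: (le_trans _ (q_lb_left wy K0 HK)); rewrite lee_fin.
  pose d := ka * (y - l) * (- pn / 2).
  have hd : d <= y - (y + a * x).
    rewrite opprD addNKr -mulrN /d; apply: ler_pM => //.
    - by rewrite mulr_ge0// ltW.
    - exact: ltW.
    - lra.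
  have d0 : 0 <= d by apply: mulr_ge0; [apply: mulr_ge0; apply: ltW | apply: ltW].
  have hd2 : d ^+ 2 <= (y - (y + a * x)) ^+ 2 by rewrite !expr2; nra.
  have -> : c0 = K * d ^+ 2 / 4.
    by rewrite /c0 /K /d; field; rewrite !gt_eqF.
  by rewrite ler_wpM2r // ler_wpM2l.
- move=> [C HC] _.
  have [e e0 He] := near_left_ex HC.
  pose C' := Order.max C 1.
  have C'0 : 0 < C' by rewrite lt_max ltr01 orbT.
  have CC' : C <= C' by rewrite le_max lexx.
  have pp2 : 0 < pp / 2 by rewrite divr_gt0.
  pose S := ball pp (pp / 2).
  have mS : measurable S by exact: measurable_realfun.measurable_ball.
  have muS : (0 < mu S)%E by exact: spp.
  have muSf : mu S \is a fin_num.
    by rewrite ge0_fin_numE ?measure_ge0// (le_lt_trans (probability_le1 _ mS)) ?ltey.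
  pose c0 := ka ^+ 2 * pp ^+ 2 / (8 * C' ^+ 2).
  have c00 : 0 < c0.
    rewrite /c0 !expr2; apply: divr_gt0; first by apply: mulr_gt0; nra.
    by apply: mulr_gt0 => //; nra.
  exists (c0 * fine (mu S)); split.
    by rewrite mulr_gt0// fine_gt0// muS ltey_eq muSf.
  apply: ex_near_left; exists (Order.min e ((r - l) / 2)).
    by rewrite lt_min e0 divr_gt0// subr_gt0.
  move=> y /andP[+ yr']; rewrite ltrBlDr -ltrBlDl lt_min => /andP[ye yh].
  have ry0 : 0 < r - y by rewrite subr_gt0.
  have yr : r - y <= y - l by move: yh; rewrite ltr_pdivlMr //; lra.
  set a := abar mu l r y.
  have aka : ka * (r - y) <= a.
    rewrite /a /abar le_min; apply/andP; split.
      rewrite -/al; have -> : (l - y) / al = (y - l) * (- al)^-1 by field; rewrite lt_eqF.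
      rewrite mulrC; apply: (le_trans (ler_wpM2l (ltW ry0) kal)).
      by rewrite ler_wpM2r // invr_ge0 oppr_ge0 ltW.
    by rewrite -/be mulrC ler_wpM2l // ltW.
  rewrite /Gfun.
  apply: (le_trans _ (lb_integral mu measurableT mS (ltW c00) (fun x _ => qfun_ge0 _ _ _) _)).
    rewrite setIT EFinM fineK//.
  move=> x _ Sx.
  have xp : pp / 2 < x.
    move: Sx; rewrite /S ball_itv /= in_itv /= => /andP[+ _]; lra.
  have a0 : 0 < a by apply: lt_le_trans aka; rewrite mulr_gt0.
  have wy : y <= y + a * x by rewrite lerDl; apply: mulr_ge0; [exact: ltW | lra].
  pose K := 2 / (C' ^+ 2 * (r - y) ^+ 2).
  have K0 : 0 <= K by rewrite /K divr_ge0// mulr_ge0// sqr_ge0.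
  have HK : forall z, y <= z <= y + a * x -> (K%:E <= twoinvsq eta z)%E.
    move=> z /andP[yz zw]; rewrite /twoinvsq; case: ifPn => [_|ez]; first exact: leey.
    have /andP[lz zr] := etaIff z ez.
    have hz := He z.
    have /hz : r - e < z < r by rewrite zr andbT; lra.
    have rz0 : 0 < r - z by rewrite subr_gt0.
    rewrite ler_pdivrMr // => hz'.
    have : `|eta z| <= C' * (r - y).
      apply: (le_trans hz'); apply: (le_trans (ler_wpM2r (ltW rz0) CC')).
      by rewrite ler_wpM2l; [lra | exact: ltW | lra].
    move=> /ler_normlP[h1 h2].
    rewrite lee_fin /K ler_pM2l // lef_pV2 ?posrE.
    + rewrite !expr2; have hy : 0 <= C' * (r - y) by rewrite mulr_ge0// ltW.
      nra.
    + by rewrite mulr_gt0// exprn_gt0.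
    + by rewrite lt0r sqr_ge0 andbT sqrf_eq0.
  apply: (le_trans _ (q_lb_right wy K0 HK)); rewrite lee_fin.
  pose d := ka * (r - y) * (pp / 2).
  have hd : d <= (y + a * x) - y.
    rewrite addrAC subrr add0r /d; apply: ler_pM => //.
    - by rewrite mulr_ge0// ltW.
    - exact: ltW.
    - lra.
  have d0 : 0 <= d by apply: mulr_ge0; [apply: mulr_ge0; apply: ltW | apply: ltW].
  have hd2 : d ^+ 2 <= ((y + a * x) - y) ^+ 2 by rewrite !expr2; nra.
  have -> : c0 = K * d ^+ 2 / 4.
    by rewrite /c0 /K /d; field; rewrite !gt_eqF.
  by rewrite ler_wpM2r // ler_wpM2l.
Qed.
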